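(* Let $(R,\mathfrak m,k)$ be a one-dimensional analytically irreducible local domain with canonical map $k\to\overline R/\mathfrak n$ an isomorphism, with $v,a_i,n,I_i,\mathcal T(R)$ as in the context. Let $n\ge 4$ and $1\le i\le n-3$, and take $q,q'\in R$ with $v(q)=a_i$, $v(q')=a_{i+1}$. For $\alpha\in R$ put $J_\alpha^{(i)}=(q+\alpha q')+I_{i+2}$. Assume $I_iI_{i+2}\ne qI_{i+2}$ and $I_{i+1}I_{i+3}=q'I_{i+3}$. Then: (1) $J^{(i)}_\alpha\in\mathcal T(R)$ for every $\alpha\in R$; (2) if $\alpha,\beta\in R$ with $\alpha-\beta\notin\mathfrak m$, then $J^{(i)}_\alpha\not\supseteq J^{(i)}_\beta$; (3) if $k$ is infinite, then $\mathcal T(R)$ is an infinite set.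
   Context: $\overline R$ is the integral closure of $R$ in $Q(R)$, assumed finitely generated over $R$ and local with maximal ideal $\mathfrak n$; $v$ is the normalized valuation of $\overline R$; $v(R)=\{a_0=0<a_1<\cdots\}$; $n$ is the smallest integer with $a_{n+j}=a_n+j$ for all $j\ge 0$; $I_j=\{r\in R\mid v(r)\ge a_j\}$ for $0\le j\le n$. $\mathcal T(R)$ is the set of nonzero trace ideals of $R$, where a trace ideal is one of the form $\sum_{f\in\mathrm{Hom}_R(M,R)}\mathrm{Im}f$ for some module $M$. *)

(* Defs.v *)
From HB Require Import structures.
From mathcomp Require Import all_boot all_order all_algebra fraction.
Set Implicit Arguments. Unset Strict Implicit. Unset Printing Implicit Defensive.
Import Order.TTheory GRing.Theory Num.Theory.
Local Open Scope ring_scope.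

Section Defs.
Variable R : idomainType.

Definition emb (r : R) : {fraction R} := @FracField.tofrac R r.

Definition is_ideal (I : R -> Prop) : Prop :=
  I 0 /\ (forall x y, I x -> I y -> I (x + y)) /\ (forall r x, I x -> I (r * x)).

Definition is_prime_ideal (P : R -> Prop) : Prop :=
  is_ideal P /\ ~ P 1 /\ (forall x y, P (x * y) -> P x \/ P y).

Definition strict_sub (P Q : R -> Prop) : Prop :=
  (forall x, P x -> Q x) /\ exists x, Q x /\ ~ P x.

Definition krull_dim_one : Prop :=
  (exists P Q, is_prime_ideal P /\ is_prime_ideal Q /\ strict_sub P Q) /\
  ~ (exists P Q S, is_prime_ideal P /\ is_prime_ideal Q /\ is_prime_ideal S /\
        strict_sub P Q /\ strict_sub Q S).

Definition fin_gen_ideal (I : R -> Prop) : Prop :=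
  exists s : seq R, forall x,
    I x <-> exists c : 'I_(size s) -> R, x = \sum_(j < size s) c j * s`_j.

Definition noetherian : Prop := forall I, is_ideal I -> fin_gen_ideal I.

(* local ring: the non-units form an ideal (the maximal ideal m) *)
Definition max_ideal (x : R) : Prop := x \isn't a GRing.unit.
Definition is_local : Prop := is_ideal max_ideal.

Definition Rbar (z : {fraction R}) : Prop :=
  exists p : {poly R}, p \is monic /\ root (map_poly emb p) z.

Definition Rbar_fin_gen : Prop :=
  exists s : seq {fraction R}, forall z,
    Rbar z <-> exists c : 'I_(size s) -> R,
                 z = \sum_(j < size s) emb (c j) * s`_j.

(* v is the normalized (discrete, surjective onto Z) valuation of Q(R) whose
   valuation ring is Rbar; its values on 0 are irrelevant (v 0 = oo). *)
Definition normalized_valuation_of_Rbar (v : {fraction R} -> int) : Prop :=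
  (forall x y, x != 0 -> y != 0 -> v (x * y) = v x + v y) /\
  (forall x y, x != 0 -> y != 0 -> x + y != 0 -> Order.min (v x) (v y) <= v (x + y)) /\
  (forall z, z != 0 -> (Rbar z <-> 0 <= v z)) /\
  (exists t, t != 0 /\ v t = 1).

Definition nbar (v : {fraction R} -> int) (z : {fraction R}) : Prop :=
  z = 0 \/ 0 < v z.

(* canonical map k = R/m -> Rbar/n is an isomorphism (injective & surjective) *)
Definition residue_iso (v : {fraction R} -> int) : Prop :=
  (forall r : R, nbar v (emb r) <-> max_ideal r) /\
  (forall z, Rbar z -> exists r : R, nbar v (z - emb r)).

Definition residue_field_infinite : Prop :=
  exists f : nat -> R, forall i j, i <> j -> ~ max_ideal (f i - f j).

Definition value_enum (v : {fraction R} -> int) (a : nat -> int) : Prop :=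
  (forall j, a j < a j.+1) /\
  (forall x, (exists r : R, r != 0 /\ v (emb r) = x) <-> exists j, x = a j).

Definition conductor_index (a : nat -> int) (n : nat) : Prop :=
  (forall j, a (n + j)%N = a n + j%:Z) /\
  (forall n', (n' < n)%N -> ~ (forall j, a (n' + j)%N = a n' + j%:Z)).

Definition Iv (v : {fraction R} -> int) (a : nat -> int) (j : nat) (r : R) : Prop :=
  r = 0 \/ a j <= v (emb r).

Definition ideal_mul (I J : R -> Prop) (x : R) : Prop :=
  exists s : seq (R * R), (forall p, p \in s -> I p.1 /\ J p.2) /\
    x = \sum_(p <- s) p.1 * p.2.

Definition scal_ideal (q : R) (I : R -> Prop) (x : R) : Prop :=
  exists y, I y /\ x = q * y.

Definition gen_plus (g : R) (I : R -> Prop) (x : R) : Prop :=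
  exists r y, I y /\ x = r * g + y.

Definition set_eq (I J : R -> Prop) : Prop := forall x, I x <-> J x.
Definition set_sub (I J : R -> Prop) : Prop := forall x, I x -> J x.

(* trace of an R-module M: sum of the images of all f in Hom_R(M, R) *)
Definition trace_of (M : lmodType R) (x : R) : Prop :=
  exists s : seq ({linear M -> R^o} * M), x = \sum_(p <- s) p.1 p.2.

Definition in_TR (I : R -> Prop) : Prop :=
  (exists x, I x /\ x != 0) /\ exists M : lmodType R, set_eq I (trace_of M).

Definition TR_infinite : Prop :=
  exists f : nat -> (R -> Prop),
    (forall j, in_TR (f j)) /\ (forall j l, j <> l -> ~ set_eq (f j) (f l)).

End Defs.

(* Main.v *)
Require Import Defs.
From HB Require Import structures.
From mathcomp Require Import all_boot all_order all_algebra fraction.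
From mathcomp Require Import generic_quotient zify ring lra.
From mathcomp Require Import boolp.
From Stdlib Require Import ProofIrrelevance.
Import Order.TTheory GRing.Theory Num.Theory.
Set Implicit Arguments. Unset Strict Implicit. Unset Printing Implicit Defensive.
Local Open Scope ring_scope.
Local Open Scope quotient_scope.

Lemma emb_inj (R : idomainType) : injective (@emb R).
Proof. by move=> x y /eqP; rewrite /emb tofrac_eq => /eqP. Qed.
Lemma embM (R : idomainType) (x y : R) : emb (x * y) = emb x * emb y.
Proof. exact: tofracM. Qed.
Lemma embD (R : idomainType) (x y : R) : emb (x + y) = emb x + emb y.
Proof. exact: tofracD. Qed.
Lemma embB (R : idomainType) (x y : R) : emb (x - y) = emb x - emb y.
Proof. exact: tofracB. Qed.
Lemma embN (R : idomainType) (x : R) : emb (- x) = - emb x.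
Proof. exact: tofracN. Qed.
Lemma emb0 (R : idomainType) : emb (0 : R) = 0.
Proof. exact: tofrac0. Qed.
Lemma emb1 (R : idomainType) : emb (1 : R) = 1.
Proof. exact: tofrac1. Qed.
Lemma emb_eq0 (R : idomainType) (x : R) : (emb x == 0) = (x == 0).
Proof. exact: tofrac_eq0. Qed.
Lemma embV (R : idomainType) (x : R) : x \is a GRing.unit -> emb (x^-1) = (emb x)^-1.
Proof. move=> ux; rewrite /emb; exact: rmorphV. Qed.

Section Val.
Variables (R : idomainType) (v : {fraction R} -> int).
Hypothesis Hv : normalized_valuation_of_Rbar v.
Local Notation F := {fraction R}.

Lemma vM (x y : F) : x != 0 -> y != 0 -> v (x * y) = v x + v y.
Proof. exact: (proj1 Hv). Qed.

Lemma v1 : v 1 = 0.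
Proof. have := @vM 1 1 (oner_neq0 F) (oner_neq0 F); rewrite mulr1; lia. Qed.

Lemma vN1 : v (-1) = 0.
Proof.
have h : (-1 : F) != 0 by rewrite oppr_eq0 oner_neq0.
have := vM h h; rewrite mulrNN mulr1 v1; lia.
Qed.

Lemma vN (x : F) : x != 0 -> v (- x) = v x.
Proof.
move=> x0; have h : (-1 : F) != 0 by rewrite oppr_eq0 oner_neq0.
by rewrite -mulN1r vM // vN1 add0r.
Qed.

Lemma vV (x : F) : x != 0 -> v (x^-1) = - v x.
Proof.
move=> x0; have := vM x0 (invr_neq0 x0); rewrite mulfV // v1; lia.
Qed.

Lemma vDiv (x y : F) : x != 0 -> y != 0 -> v (x / y) = v x - v y.
Proof. by move=> x0 y0; rewrite vM ?invr_neq0 // vV. Qed.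

Lemma vD (x y : F) c : x != 0 -> y != 0 -> x + y != 0 -> c <= v x -> c <= v y ->
  c <= v (x + y).
Proof.
move=> x0 y0 s0 cx cy; apply: le_trans ((proj1 (proj2 Hv)) x y x0 y0 s0).
by rewrite le_min cx cy.
Qed.

Lemma vDl (x y : F) : x != 0 -> (y = 0 \/ v x < v y) -> x + y != 0 /\ v (x + y) = v x.
Proof.
move=> x0 [->|]; first by rewrite addr0.
move=> lt; have [->|y0] := eqVneq y 0; first by rewrite addr0.
have s0 : x + y != 0.
  apply/negP => /eqP s0; have : y = - x by apply/eqP; rewrite -addr_eq0 addrC s0.
  move=> yx; move: lt; rewrite yx vN //; lia.
split=> //; apply/eqP; rewrite eq_le; apply/andP; split; last first.
  by apply: vD => //; apply: ltW.
have e : x = (x + y) + - y by rewrite addrK.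
have ny0 : - y != 0 by rewrite oppr_eq0.
have sx : x + y + - y != 0 by rewrite -e.
have := (proj1 (proj2 Hv)) (x + y) (- y) s0 ny0 sx; rewrite -e vN //.
rewrite ge_min => /orP[//|h]; move: lt h; lia.
Qed.

Lemma Rbar_emb (r : R) : Rbar (emb r).
Proof.
exists ('X - r%:P); split; first exact: monicXsubC.
by rewrite /emb map_polyXsubC rootE hornerXsubC subrr.
Qed.

Lemma Rbar_v (z : F) : z != 0 -> Rbar z <-> 0 <= v z.
Proof. exact: (proj1 (proj2 (proj2 Hv))). Qed.

Lemma v_emb_ge0 (r : R) : r != 0 -> 0 <= v (emb r).
Proof. by move=> r0; apply/(Rbar_v _).1; [rewrite emb_eq0|exact: Rbar_emb]. Qed.

End Val.
Lemma frac_repr (R : idomainType) (x : {fraction R}) :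
  exists a b : R, b != 0 /\ x = emb a / emb b.
Proof.
elim/quotW: x => r.
exists (\n_r), (\d_r); split; first exact: denom_ratioP.
have hd : emb (\d_r) != 0 by rewrite /emb tofrac_eq0 denom_ratioP.
apply: (mulIf hd); rewrite mulfVK //.
rewrite /emb; unlock FracField.tofrac.
rewrite -[_ * _]/(FracField.mul _ _) -FracField.pi_mul; apply/eqmodP; rewrite /= FracField.equivfE /FracField.mulf /=.
rewrite !numden_Ratio ?oner_neq0 ?mulf_neq0 ?denom_ratioP ?oner_neq0 //.
by rewrite !mulr1 mulrC.
Qed.

Definition inR (R : idomainType) (x : {fraction R}) := exists r : R, emb r = x.

Lemma inR_sum (R : idomainType) (I : finType) (f : I -> {fraction R}) :
  (forall j, inR (f j)) -> inR (\sum_j f j).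
Proof.
move=> H; apply: (big_ind (@inR R)) => //.
- by exists 0; rewrite emb0.
- by move=> x y [r <-] [s <-]; exists (r + s); rewrite embD.
Qed.

Lemma common_den (R : idomainType) (s : seq {fraction R}) :
  exists D : R, D != 0 /\ forall j, (j < size s)%N -> inR (emb D * s`_j).
Proof.
elim: s => [|x s [D [D0 HD]]]; first by exists 1; rewrite oner_neq0.
have [a [b [b0 ->]]] := frac_repr x.
exists (b * D); split; first by rewrite mulf_neq0.
case=> [_|j] /=.
  exists (D * a); rewrite !embM [emb b * _]mulrC -mulrA [emb b * (emb a / emb b)]mulrCA mulfV ?emb_eq0 ?mulr1 //.
move=> h; have [r Er] := HD j h; exists (b * r); by rewrite !embM Er mulrA.
Qed.


Section Val2.
Variables (R : idomainType) (v : {fraction R} -> int) (a : nat -> int) (n : nat).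
Hypothesis Hv : normalized_valuation_of_Rbar v.
Hypothesis Hres : residue_iso v.
Hypothesis Ha : value_enum v a.
Hypothesis Hn : conductor_index a n.
Hypothesis Hfg : Rbar_fin_gen R.
Local Notation F := {fraction R}.

Lemma a_lt j k : (j < k)%N -> a j < a k.
Proof.
elim: k => // k IH; rewrite ltnS leq_eqVlt => /orP[/eqP->|/IH h].
  exact: (proj1 Ha).
exact: lt_trans h ((proj1 Ha) k).
Qed.

Lemma a_le j k : (j <= k)%N -> a j <= a k.
Proof. by rewrite leq_eqVlt => /orP[/eqP->//|/a_lt/ltW]. Qed.

Lemma a_lt_inv j k : a j < a k -> (j < k)%N.
Proof. by case: (ltnP j k) => // /a_le h1 h2; move: (le_lt_trans h1 h2); rewrite ltxx. Qed.

Lemma a_le_inv j k : a j <= a k -> (j <= k)%N.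
Proof. by case: (leqP j k) => // /a_lt h1 h2; move: (lt_le_trans h1 h2); rewrite ltxx. Qed.

Lemma val_S (r : R) : r != 0 -> exists j, v (emb r) = a j.
Proof. by move=> r0; apply/((proj2 Ha) (v (emb r))).1; exists r. Qed.

Lemma exists_val j : exists r : R, r != 0 /\ v (emb r) = a j.
Proof. by apply/((proj2 Ha) (a j)).2; exists j. Qed.

Lemma gap (r : R) k : r != 0 -> a k < v (emb r) -> a k.+1 <= v (emb r).
Proof. by move=> r0; have [j ->] := val_S r0 => /a_lt_inv; apply: a_le. Qed.

Lemma unit_v0 (r : R) : r != 0 -> v (emb r) = 0 -> r \is a GRing.unit.
Proof.
move=> r0 h; case: (boolP (r \is a GRing.unit)) => // nu.
have := ((proj1 Hres) r).2 nu; rewrite /nbar h ltxx => [[/eqP|//]].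
by rewrite emb_eq0 (negbTE r0).
Qed.

Lemma v0_unit (r : R) : r \is a GRing.unit -> r != 0 /\ v (emb r) = 0.
Proof.
move=> u; have r0 : r != 0 by apply/negP => /eqP r0; move: u; rewrite r0 unitr0.
split=> //; have h : ~ nbar v (emb r).
  by move=> /((proj1 Hres) r).1; rewrite /max_ideal u.
have := v_emb_ge0 Hv r0; rewrite le_eqVlt => /orP[/eqP<-//|h2].
by case: h; right.
Qed.

Lemma pos_nonunit (r : R) : r != 0 -> max_ideal r -> 0 < v (emb r).
Proof.
move=> r0 /((proj1 Hres) r).2 [/eqP|//]; by rewrite emb_eq0 (negbTE r0).
Qed.

Lemma residue (z : F) : z != 0 -> 0 <= v z ->
  exists c : R, z = emb c \/ (z - emb c != 0 /\ 0 < v (z - emb c)).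
Proof.
move=> z0 h; have [c Hc] := (proj2 Hres) z ((Rbar_v Hv z0).2 h).
exists c; case: Hc => [/eqP|h2].
  by rewrite subr_eq0 => /eqP; left.
have [/eqP|nz] := eqVneq (z - emb c) 0; first by rewrite subr_eq0 => /eqP; left.
by right.
Qed.

Lemma cond : exists e, forall w : F, w != 0 -> e <= v w -> inR w.
Proof.
have [s Hs] := Hfg.
have [D [D0 HD]] := common_den s.
have eD0 : emb D != 0 by rewrite emb_eq0.
exists (v (emb D)) => w w0 le.
have z0 : w / emb D != 0 by rewrite mulf_neq0 ?invr_neq0.
have : Rbar (w / emb D) by apply/(Rbar_v Hv z0); rewrite vDiv //; lia.
move=> /Hs [c Hc].
have -> : w = emb D * (w / emb D) by rewrite mulrC mulfVK.
rewrite Hc mulr_sumr; apply: inR_sum => j.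
have [r Er] := HD j (ltn_ord j).
by exists (c j * r); rewrite embM Er mulrCA.
Qed.

End Val2.

Lemma gen_plus_ideal (R : idomainType) (g : R) (I : R -> Prop) :
  is_ideal I -> is_ideal (gen_plus g I).
Proof.
move=> [I0 [ID IM]]; split; first by exists 0, 0; rewrite mul0r addr0.
split.
  move=> x y [r1 [y1 [h1 ->]]] [r2 [y2 [h2 ->]]]; exists (r1 + r2), (y1 + y2).
  by split; [exact: ID|rewrite mulrDl addrACA].
move=> r x [r1 [y1 [h1 ->]]]; exists (r * r1), (r * y1).
by split; [exact: IM|rewrite mulrDr mulrA].
Qed.

Section Val3.
Variables (R : idomainType) (v : {fraction R} -> int) (a : nat -> int) (n : nat).
Hypothesis Hv : normalized_valuation_of_Rbar v.
Hypothesis Hres : residue_iso v.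
Hypothesis Ha : value_enum v a.
Hypothesis Hn : conductor_index a n.
Hypothesis Hfg : Rbar_fin_gen R.
Local Notation F := {fraction R}.
Local Notation I := (Iv v a).

Lemma fid (K : fieldType) (w c y : K) : w != 0 -> c != 0 -> y / c - ((w - c) * y / c) / w = y / w.
Proof. move=> w0 c0; field. by rewrite w0 c0. Qed.

Lemma Iv_ne m r : I m r -> r = 0 \/ (r != 0 /\ a m <= v (emb r)).
Proof.
move=> Ir; have [->|r0] := eqVneq r 0; first by left.
by right; split => //; case: Ir => // r00; move: r0; rewrite r00 eqxx.
Qed.

Lemma Iv_val m r : r != 0 -> a m <= v (emb r) -> I m r.
Proof. by move=> _ h; right. Qed.

Lemma Iv_ideal m : is_ideal (I m).
Proof.
split; first by left.
split.
  move=> x y /Iv_ne [->|[x0 hx]]; first by rewrite add0r.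
  move=> /Iv_ne [->|[y0 hy]]; first by rewrite addr0; right.
  have [->|s0] := eqVneq (x + y) 0; first by left.
  right; rewrite embD; apply: (vD Hv) => //; by rewrite -?embD emb_eq0.
move=> r x /Iv_ne [->|[x0 hx]]; first by rewrite mulr0; left.
have [->|r0] := eqVneq r 0; first by rewrite mul0r; left.
right; rewrite embM vM ?emb_eq0 //; have := v_emb_ge0 Hv r0; lia.
Qed.

Lemma vz_ge0 m (z : F) : (m <= n)%N -> (1 <= n)%N -> z != 0 ->
  (forall y, I m y -> inR (z * emb y)) -> 0 <= v z.
Proof.
move=> mn n1 z0 H; rewrite leNgt; apply/negP => hz.
pose p := absz (- v z).
have pE : (p%:Z = - v z) by rewrite /p abszE ger0_norm // oppr_ge0 ltW.
have p1 : (1 <= p)%N by lia.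
have [r [r0 vr]] := exists_val Ha (n + p.-1).
have Ir : I m r by right; rewrite vr; apply: (a_le Ha); lia.
have [s Es] := H r Ir.
have s0 : s != 0 by rewrite -emb_eq0 Es mulf_neq0 ?emb_eq0.
have vs : v (emb s) = a n - 1.
  rewrite Es vM ?emb_eq0 // vr ((proj1 Hn) p.-1).
  have : (p.-1)%:Z = p%:Z - 1 by lia.
  by move=> ->; rewrite pE; lia.
have [j vj] := val_S Ha s0.
have jn : (j < n)%N by apply: (a_lt_inv Ha); rewrite -vj vs; lia.
have ajn : a j <= a n.-1 by apply: (a_le Ha); lia.
have an1 : a n.-1 < a n by apply: (a_lt Ha); lia.
apply: ((proj2 Hn) n.-1); first by lia.
move=> k; case: k => [|k]; first by rewrite addn0; lia.
have -> : (n.-1 + k.+1 = n + k)%N by lia.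
rewrite ((proj1 Hn) k); lia.
Qed.

Lemma inv_lemma m (w : F) : w != 0 -> v w = 0 ->
  (forall y, I m y -> inR (w * emb y)) ->
  forall y, I m y -> exists r, emb r = emb y / w /\ I m r.
Proof.
move=> w0 vw H.
have [e He] := cond Hv Hfg.
have Hr : forall y, I m y -> inR (emb y / w) -> exists r, emb r = emb y / w /\ I m r.
  move=> y Iy [r Er]; exists r; split => //.
  move: Iy => /Iv_ne [y0|[y0 hy]]; first by left; apply: emb_inj; rewrite Er y0 emb0 mul0r.
  have [->|r0] := eqVneq r 0; first by left.
  by right; rewrite Er vDiv ?emb_eq0 // vw subr0.
suff K : forall k : nat, forall y, I m y -> (y = 0 \/ e - k%:Z <= v (emb y)) -> inR (emb y / w).
  move=> y Iy; apply: Hr => //; apply: (K (absz (e - v (emb y)))) => //.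
  by right; lia.
have vw0 : 0 <= v w by rewrite vw.
have [c [Ec|[w10 vw1]]] := residue Hv Hres w0 vw0.
  have ec0 : emb c != 0 by rewrite -Ec.
  have c0 : c != 0 by rewrite -emb_eq0.
  have uc : c \is a GRing.unit by apply: (unit_v0 Hres) => //; rewrite -Ec.
  move=> k y Iy _; exists (y * c^-1); by rewrite embM embV // Ec.
set w1 := w - emb c in w10 vw1.
have [ec0 vc] : emb c != 0 /\ v (emb c) = 0.
  have := vDl Hv w0 (or_intror (_ : v w < v (- w1))).
  have -> : w + - w1 = emb c by rewrite /w1 opprB addrCA subrr addr0.
  rewrite vw; apply; rewrite vN //; lia.
have c0 : c != 0 by rewrite -emb_eq0.
have uc : c \is a GRing.unit by apply: (unit_v0 Hres).
elim=> [|k IH] y Iy.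
  case=> [->|hy]; first by exists 0; rewrite emb0 mul0r.
  have [->|y0] := eqVneq y 0; first by exists 0; rewrite emb0 mul0r.
  apply: He; first by rewrite mulf_neq0 ?invr_neq0 ?emb_eq0.
  rewrite vDiv ?emb_eq0 // vw; lia.
case=> [->|hy]; first by exists 0; rewrite emb0 mul0r.
have [->|y0] := eqVneq y 0; first by exists 0; rewrite emb0 mul0r.
have [t1 Et1] := H y Iy.
have Et : emb (t1 - c * y) = w1 * emb y by rewrite embB embM Et1 /w1 mulrBl.
set t := t1 - c * y in Et.
have vy : a m <= v (emb y) by case: (Iv_ne Iy) => [/eqP|[]//]; rewrite (negbTE y0).
have Iy2 : I m (t * c^-1) /\ (t * c^-1 = 0 \/ e - k%:Z <= v (emb (t * c^-1))).
  have [->|t0] := eqVneq t 0; first by rewrite mul0r; split; left.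
  have vt : v (emb (t * c^-1)) = v w1 + v (emb y).
    rewrite embM embV // vDiv ?emb_eq0 // Et vM ?emb_eq0 // vc; lia.
  split; right; rewrite vt; lia.
have [s Es] := IH _ Iy2.1 Iy2.2.
exists (y * c^-1 - s); rewrite embB embM embV // Es embM embV // Et.
rewrite /w1; exact: fid.
Qed.

Lemma decomp k (g x : R) : g != 0 -> v (emb g) = a k -> I k x ->
  exists u x1, x = u * g + x1 /\ I k.+1 x1.
Proof.
move=> g0 vg /Iv_ne [->|[x0 hx]]; first by exists 0, 0; rewrite mul0r addr0; split => //; left.
case: (ltP (a k) (v (emb x))) => h.
  by exists 0, x; rewrite mul0r add0r; split => //; right; apply: (gap Ha).
have eg0 : emb g != 0 by rewrite emb_eq0.
have z0 : emb x / emb g != 0 by rewrite mulf_neq0 ?invr_neq0 ?emb_eq0.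
have vz : v (emb x / emb g) = 0 by rewrite vDiv ?emb_eq0 // vg; lia.
have vz0 : 0 <= v (emb x / emb g) by rewrite vz.
have [c [Ec|[n0 vn]]] := residue Hv Hres z0 vz0.
  exists c, 0; rewrite addr0; split; last by left.
  by apply: emb_inj; rewrite embM -Ec mulfVK.
exists c, (x - c * g); split; first by rewrite addrC subrK.
have e1 : emb (x - c * g) = (emb x / emb g - emb c) * emb g.
  by rewrite embB embM mulrBl mulfVK.
have x10 : x - c * g != 0 by rewrite -emb_eq0 e1 mulf_neq0.
right; apply: (gap Ha) => //; rewrite e1 vM // vg -[X in X < _]add0r ltrD2r. exact: vn.
Qed.

End Val3.

Definition JT (R : idomainType) (P : R -> Prop) (HP : is_ideal P) := {x : R | P x}.

Section JTS.
Variables (R : idomainType) (P : R -> Prop) (HP : is_ideal P).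
Let T := JT HP.
Definition jval (x : T) : R := proj1_sig x.
Lemma jval_inj : injective jval.
Proof. move=> [x px] [y py] /= E; subst y; by rewrite (proof_irrelevance _ px py). Qed.
Definition jzero : T := exist _ 0 (proj1 HP).
Definition jadd (x y : T) : T := exist _ (jval x + jval y) ((proj1 (proj2 HP)) _ _ (proj2_sig x) (proj2_sig y)).
Definition jscale (r : R) (x : T) : T := exist _ (r * jval x) ((proj2 (proj2 HP)) r _ (proj2_sig x)).
Definition jopp (x : T) : T := jscale (-1) x.
Definition jinc (r : R) (pr : P r) : T := exist _ r pr.
End JTS.

HB.instance Definition _ R P HP := gen_eqMixin (@JT R P HP).
HB.instance Definition _ R P HP := gen_choiceMixin (@JT R P HP).

Section JTS2.
Variables (R : idomainType) (P : R -> Prop) (HP : is_ideal P).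
Let T := JT HP.
Lemma jaddA : associative (@jadd R P HP).
Proof. by move=> x y z; apply: jval_inj; rewrite /= addrA. Qed.
Lemma jaddC : commutative (@jadd R P HP).
Proof. by move=> x y; apply: jval_inj; rewrite /= addrC. Qed.
Lemma jadd0 : left_id (jzero HP) (@jadd R P HP).
Proof. by move=> x; apply: jval_inj; rewrite /= add0r. Qed.
Lemma jaddN : left_inverse (jzero HP) (@jopp R P HP) (@jadd R P HP).
Proof. by move=> x; apply: jval_inj; rewrite /= mulN1r addNr. Qed.
End JTS2.

HB.instance Definition _ R P HP := GRing.isZmodule.Build (@JT R P HP)
  (@jaddA R P HP) (@jaddC R P HP) (@jadd0 R P HP) (@jaddN R P HP).

Section JTS3.
Variables (R : idomainType) (P : R -> Prop) (HP : is_ideal P).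
Lemma jscaleA a b (x : JT HP) : jscale a (jscale b x) = jscale (a * b) x.
Proof. by apply: jval_inj; rewrite /= mulrA. Qed.
Lemma jscale1 : left_id 1 (@jscale R P HP).
Proof. by move=> x; apply: jval_inj; rewrite /= mul1r. Qed.
Lemma jscaleDr : right_distributive (@jscale R P HP) +%R.
Proof. by move=> r x y; apply: jval_inj; rewrite /= mulrDr. Qed.
Lemma jscaleDl (x : JT HP) : {morph (@jscale R P HP)^~ x: a b / a + b}.
Proof. by move=> r s; apply: jval_inj; rewrite /= mulrDl. Qed.
End JTS3.

HB.instance Definition _ (R : idomainType) (P : R -> Prop) (HP : is_ideal P) := GRing.Zmodule_isLmodule.Build R (@JT R P HP)
  (@jscaleA R P HP) (@jscale1 R P HP) (@jscaleDr R P HP) (@jscaleDl R P HP).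

Definition jvalR (R : idomainType) (P : R -> Prop) (HP : is_ideal P) (x : JT HP) : R^o := jval x.
Lemma jval_lin (R : idomainType) (P : R -> Prop) (HP : is_ideal P) : linear (@jvalR R P HP).
Proof. by move=> r x y. Qed.
HB.instance Definition _ (R : idomainType) (P : R -> Prop) (HP : is_ideal P) :=
  GRing.isLinear.Build R (JT HP) R^o _ (@jvalR R P HP) (@jval_lin R P HP).

Lemma trace_crit (R : idomainType) (P : R -> Prop) (HP : is_ideal P) (g : R)
  (g0 : g != 0) (Pg : P g)
  (K : forall z : {fraction R}, (forall x, P x -> exists r, emb r = z * emb x) ->
        forall x, P x -> exists r, emb r = z * emb x /\ P r) :
  set_eq P (trace_of (JT HP)).
Proof.
move=> x; split.
  move=> Px; exists [:: ((jvalR (HP:=HP) : {linear JT HP -> R^o}), jinc HP Px)].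
  by rewrite big_cons big_nil addr0.
case=> s ->; elim: s => [|[f m] s IH]; first by rewrite big_nil; exact: (proj1 HP).
rewrite big_cons /=; apply: (proj1 (proj2 HP)) => //.
set z := @emb R (f (jinc HP Pg)) / emb g.
have eg0 : emb g != 0 by rewrite emb_eq0.
have Hf : forall y (Py : P y), @emb R (f (jinc HP Py)) = z * emb y.
  move=> y Py.
  have E : g *: jinc HP Py = y *: jinc HP Pg by apply: jval_inj; rewrite /= mulrC.
  have := congr1 f E; rewrite !linearZ /= => E2.
  rewrite /z mulrAC; apply: (mulIf eg0); rewrite mulfVK // -!embM; congr emb.
  by rewrite mulrC [RHS]mulrC; exact: E2.
have [r [Er Pr]] := K z (fun y Py => ex_intro _ _ (Hf y Py)) _ (proj2_sig m).
have -> : m = jinc HP (proj2_sig m) by apply: jval_inj.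
by rewrite (emb_inj (etrans (Hf _ _) (esym Er))).
Qed.

Lemma fid2 (K : fieldType) (X Y Z G Q : K) : Z != 0 -> G != 0 -> Q != 0 ->
  X * (Z * Y / (Z * G / Q)) / Q = X * Y / G.
Proof. move=> z0 g0 q0; field. by rewrite z0 g0 q0. Qed.
Lemma fid3 (K : fieldType) (U Y X1 G : K) : G != 0 ->
  U * Y + X1 * Y / G = (U * G + X1) * Y / G.
Proof. move=> g0; field. by rewrite g0. Qed.
Lemma fid4 (K : fieldType) (X Y Q G : K) : G != 0 -> Q != 0 ->
  Q * ((X * Y / G) / (Q / G)) = X * Y.
Proof. move=> g0 q0; field. by rewrite g0 q0. Qed.

Section Main.
Variables (R : idomainType) (v : {fraction R} -> int) (a : nat -> int) (n i : nat) (q q' : R).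
Hypothesis Hv : normalized_valuation_of_Rbar v.
Hypothesis Hres : residue_iso v.
Hypothesis Ha : value_enum v a.
Hypothesis Hn : conductor_index a n.
Hypothesis Hfg : Rbar_fin_gen R.
Hypothesis Hloc : is_local R.
Hypothesis n4 : (4 <= n)%N.
Hypothesis i1 : (1 <= i)%N.
Hypothesis i3 : (i <= n - 3)%N.
Hypothesis q0 : q != 0.
Hypothesis vq : v (emb q) = a i.
Hypothesis q'0 : q' != 0.
Hypothesis vq' : v (emb q') = a i.+1.
Hypothesis HA : ~ set_eq (ideal_mul (Iv v a i) (Iv v a i.+2)) (scal_ideal q (Iv v a i.+2)).
Hypothesis HB : set_eq (ideal_mul (Iv v a i.+1) (Iv v a i.+3)) (scal_ideal q' (Iv v a i.+3)).
Local Notation F := {fraction R}.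
Local Notation I := (Iv v a).

Lemma Bp x y : I i.+1 x -> I i.+3 y -> exists y', I i.+3 y' /\ x * y = q' * y'.
Proof.
move=> Ix Iy; apply: (HB (x * y)).1; exists [:: (x, y)]; split.
  by move=> p; rewrite inE => /eqP ->.
by rewrite big_cons big_nil addr0.
Qed.

Lemma Lmain (g h : R) (z : F) : g != 0 -> v (emb g) = a i -> z != 0 -> 0 < v z ->
  emb h = z * emb g -> v (emb h) = a i.+1 ->
  (forall y, I i.+2 y -> inR (z * emb y)) -> False.
Proof.
move=> g0 vg z0 vz Eh vh Hz; apply: HA.
have eg0 : emb g != 0 by rewrite emb_eq0.
have eh0 : emb h != 0 by rewrite Eh mulf_neq0.
have eq'0 : emb q' != 0 by rewrite emb_eq0.
have eq0 : emb q != 0 by rewrite emb_eq0.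
have Ih : I i.+1 h by right; rewrite vh.
have Hc : forall x y, I i.+1 x -> I i.+2 y -> inR (emb x * emb y / emb g).
  move=> x y Ix Iy.
  have [->|y0] := eqVneq y 0; first by exists 0; rewrite emb0 mulr0 mul0r.
  have [p1 Ep1] := Hz y Iy.
  have Ip1 : I i.+3 p1.
    have p10 : p1 != 0 by rewrite -emb_eq0 Ep1 mulf_neq0 ?emb_eq0.
    right; apply: (gap Ha) => //; rewrite Ep1 vM ?emb_eq0 //.
    case: (Iv_ne Iy) => [/eqP|[_ hy]]; first by rewrite (negbTE y0).
    move: vz hy; lia.
  set w := emb h / emb q'.
  have w0 : w != 0 by rewrite mulf_neq0 ?invr_neq0.
  have vw : v w = 0 by rewrite vDiv // vh vq'; lia.
  have Hw : forall y', I i.+3 y' -> inR (w * emb y').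
    move=> y' Iy'; have [y'' [_ E]] := Bp Ih Iy'; exists y''.
    by rewrite /w mulrAC -embM E embM [emb q' * _]mulrC mulfK.
  have [p2 [Ep2 Ip2]] := inv_lemma Hv Hres Hfg w0 vw Hw Ip1.
  have [p3 [_ E3]] := Bp Ix Ip2.
  exists p3.
  have -> : emb p3 = emb x * emb p2 / emb q' by rewrite -embM E3 embM [emb q' * _]mulrC mulfK.
  by rewrite Ep2 Ep1 /w Eh fid2.
have Hd : forall x y, I i x -> I i.+2 y -> exists p, emb p = emb x * emb y / emb g /\ I i.+2 p.
  move=> x y Ix Iy.
  have [u [x1 [Ex Ix1]]] := decomp Hv Hres Ha g0 vg Ix.
  have [p' Ep'] := Hc x1 y Ix1 Iy.
  have Ep : emb (u * y + p') = emb x * emb y / emb g by rewrite embD embM Ep' Ex embD embM fid3.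
  exists (u * y + p'); split => //.
  have [->|p0] := eqVneq (u * y + p') 0; first by left.
  have e0 : emb (u * y + p') != 0 by rewrite emb_eq0.
  have x0 : x != 0 by apply: (contraNneq _ e0) => x00; rewrite Ep x00 emb0 !mul0r.
  have y0 : y != 0 by apply: (contraNneq _ e0) => y00; rewrite Ep y00 emb0 mulr0 mul0r.
  right; rewrite Ep vDiv ?mulf_neq0 ?emb_eq0 // vM ?emb_eq0 // vg.
  case: (Iv_ne Ix) => [/eqP|[_ hx]]; first by rewrite (negbTE x0).
  case: (Iv_ne Iy) => [/eqP|[_ hy]]; first by rewrite (negbTE y0).
  move: hx hy; lia.
set w2 := emb q / emb g.
have w20 : w2 != 0 by rewrite mulf_neq0 ?invr_neq0.
have vw2 : v w2 = 0 by rewrite vDiv // vq vg; lia.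
have Iq : I i q by right; rewrite vq.
have Hw2 : forall y, I i.+2 y -> inR (w2 * emb y).
  move=> y Iy; have [p [Ep _]] := Hd q y Iq Iy; exists p; by rewrite Ep /w2 mulrAC.
have Hfin : forall x y, I i x -> I i.+2 y -> exists r, I i.+2 r /\ x * y = q * r.
  move=> x y Ix Iy; have [p [Ep Ip]] := Hd x y Ix Iy.
  have [r [Er Ir]] := inv_lemma Hv Hres Hfg w20 vw2 Hw2 Ip.
  exists r; split => //; apply: emb_inj; by rewrite !embM Er Ep /w2 fid4.
have [I0 [ID IM]] := @Iv_ideal R v a Hv i.+2.
move=> x; split.
  move=> [s [Hs ->]]; elim: s Hs => [|p s IH] Hs.
    by exists 0; rewrite big_nil mulr0.
  rewrite big_cons.
  have [Hp1 Hp2] := Hs p (mem_head _ _).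
  have [r1 [Ir1 E1]] := Hfin _ _ Hp1 Hp2.
  have [r2 [Ir2 E2]] := IH (fun p' hp' => Hs p' ltac:(by rewrite inE hp' orbT)).
  by exists (r1 + r2); split; [exact: ID | rewrite E1 E2 mulrDr].
move=> [y [Iy ->]]; exists [:: (q, y)]; split.
  by move=> p; rewrite inE => /eqP ->.
by rewrite big_cons big_nil addr0.
Qed.


Lemma g_alpha (al : R) : q + al * q' != 0 /\ v (emb (q + al * q')) = a i.
Proof.
have h : emb (al * q') = 0 \/ v (emb q) < v (emb (al * q')).
  have [->|al0] := eqVneq al 0; first by left; rewrite mul0r emb0.
  right; rewrite embM vM ?emb_eq0 // vq' vq.
  have := v_emb_ge0 Hv al0; have := a_lt Ha (ltnSn i); lia.
have eq0 : emb q != 0 by rewrite emb_eq0.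
have [h1 h2] := vDl Hv eq0 h.
by rewrite -emb_eq0 embD; split => //; rewrite h2 vq.
Qed.

Lemma part1 (al : R) : in_TR (gen_plus (q + al * q') (I i.+2)).
Proof.
set g := q + al * q'.
have [g0 vg] := g_alpha al.
set J := gen_plus g (I i.+2).
have HI := @Iv_ideal R v a Hv i.+2.
have HJ : is_ideal J := gen_plus_ideal g HI.
have Jg : J g by exists 1, 0; rewrite mul1r addr0; split => //; left.
have sub : forall y, I i.+2 y -> J y by move=> y Iy; exists 0, y; rewrite mul0r add0r.
split; first by exists g.
exists (JT HJ); apply: (@trace_crit R J HJ g g0 Jg) => z Hz x Jx.
have [->|z0] := eqVneq z 0.
  by exists 0; rewrite emb0 mul0r; split => //; exact: (proj1 HJ).
have vz : 0 <= v z.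
  apply: (vz_ge0 Hv Ha Hn (m := i.+2)) => //; first lia; first lia.
  by move=> y Iy; apply: Hz; apply: sub.
have eg0 : emb g != 0 by rewrite emb_eq0.
have Hg : exists t, emb t = z * emb g /\ J t.
  have [c [Ec|[z10 vz1]]] := residue Hv Hres z0 vz.
    by exists (c * g); rewrite embM Ec; split => //; exists c, 0; rewrite addr0; split => //; left.
  have [p0 Ep0] := Hz g Jg.
  have Ep : emb (p0 - c * g) = (z - emb c) * emb g by rewrite embB embM Ep0 mulrBl.
  set p := p0 - c * g in Ep.
  have p0' : p != 0 by rewrite -emb_eq0 Ep mulf_neq0.
  have vp : v (emb p) = v (z - emb c) + a i by rewrite Ep vM // vg.
  have vp1 : a i.+1 <= v (emb p).
    apply: (gap Ha) => //; rewrite vp -[X in X < _]add0r ltrD2r; exact: vz1.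
  case: (ltP (a i.+1) (v (emb p))) => h.
    have Ip : I i.+2 p by right; apply: (gap Ha).
    exists (c * g + p); split; last by exists c, p.
    by rewrite embD embM Ep mulrBl addrC subrK.
  exfalso; apply: (Lmain g0 vg z10 vz1 Ep).
    by apply/eqP; rewrite eq_le h vp1.
  move=> y Iy; have [t3 E3] := Hz y (sub _ Iy).
  by exists (t3 - c * y); rewrite embB embM E3 mulrBl.
have [t [Et Jt]] := Hg.
have [r0 [y [Iy Ex]]] := Jx.
have [t2 Et2] := Hz y (sub _ Iy).
have It2 : I i.+2 t2.
  have [->|t20] := eqVneq t2 0; first by left.
  have [y0 | [y0 hy]] := Iv_ne Iy; first by move: t20; rewrite -emb_eq0 Et2 y0 emb0 mulr0 eqxx.
  by right; rewrite Et2 vM ?emb_eq0 //; move: vz hy; lia.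
exists (r0 * t + t2); split.
  have -> : emb x = emb r0 * emb g + emb y by rewrite Ex embD embM.
  by rewrite embD embM Et Et2 mulrDr mulrCA.
apply: (proj1 (proj2 HJ)); last exact: sub.
exact: (proj2 (proj2 HJ)).
Qed.

Lemma part2 (al be : R) : ~ max_ideal (al - be) ->
  ~ set_sub (gen_plus (q + be * q') (I i.+2)) (gen_plus (q + al * q') (I i.+2)).
Proof.
move=> nu Hsub.
have Jb : gen_plus (q + be * q') (I i.+2) (q + be * q').
  by exists 1, 0; rewrite mul1r addr0; split => //; left.
have [r [y [Iy E]]] := Hsub _ Jb.
set s := 1 - r.
have Ey : y = s * q + (be - r * al) * q'.
  have -> : y = (q + be * q') - r * (q + al * q') by rewrite E addrAC subrr add0r.
  rewrite /s; ring.
have ltA := a_lt Ha (ltnSn i).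
have ltB := a_lt Ha (ltnSn i.+1).
case: (boolP (s \is a GRing.unit)) => us.
  have [s0 vs] := v0_unit Hv Hres us.
  have hx : emb (s * q) != 0 by rewrite emb_eq0 mulf_neq0.
  have [hy vy] := @vDl _ v Hv (emb (s * q)) (emb ((be - r * al) * q')) hx
     (ltac:(have [->|u0] := eqVneq (be - r * al) 0; [by left; rewrite mul0r emb0|];
       right; rewrite !embM !vM ?emb_eq0 // vs vq vq'; have := v_emb_ge0 Hv u0; lia)).
  rewrite -embD -Ey in hy vy.
  have [y0|[_ hy2]] := Iv_ne Iy; first by move: hy; rewrite y0 emb0 eqxx.
  move: hy2; rewrite vy embM vM ?emb_eq0 // vs vq; lia.
have uu : be - r * al \is a GRing.unit.
  case: (boolP (be - r * al \is a GRing.unit)) => // nu2; exfalso; apply: nu.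
  have [_ [HD HM]] : is_ideal (@max_ideal R) := Hloc.
  have h1 : max_ideal (be - r * al + (-1) * (al * s)).
    apply: HD; first exact: nu2.
    exact: (HM _ _ (HM _ _ us)).
  have -> : al - be = (-1) * (be - r * al + (-1) * (al * s)) by rewrite /s; ring.
  exact: (HM _ _ h1).
have [u0 vu] := v0_unit Hv Hres uu.
have hx : emb (- ((be - r * al) * q')) != 0 by rewrite emb_eq0 oppr_eq0 mulf_neq0.
have vx : v (emb (- ((be - r * al) * q'))) = a i.+1.
  rewrite embN (vN Hv); last by rewrite emb_eq0 mulf_neq0.
  rewrite embM vM ?emb_eq0 // vu vq'; lia.
have hyy : emb y = 0 \/ v (emb (- ((be - r * al) * q'))) < v (emb y).
  have [y0|[_ hy2]] := Iv_ne Iy; [by left; rewrite y0 emb0|]; right; rewrite vx; exact: lt_le_trans ltB hy2.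
have [hs vs] := @vDl _ v Hv _ (emb y) hx hyy.
have Es : - ((be - r * al) * q') + y = s * q by rewrite Ey addrC addrK.
rewrite -embD Es in hs vs; rewrite vx in vs.
have s0 : s != 0 by apply: (contraNneq _ hs) => ->; rewrite mul0r emb0.
have vs2 : v (emb s) = a i.+1 - a i by move: vs; rewrite embM vM ?emb_eq0 // vq; lia.
have es0 : emb s != 0 by rewrite emb_eq0.
have vsp : 0 < v (emb s) by rewrite vs2; lia.
apply: (Lmain (g := q) (h := s * q) (z := emb s) q0 vq es0 vsp (embM s q) vs).
by move=> y' _; exists (s * y'); rewrite embM.
Qed.

Lemma part3 : residue_field_infinite R -> TR_infinite R.
Proof.
move=> [f Hf]; exists (fun j => gen_plus (q + f j * q') (I i.+2)); split.
  by move=> j; apply: part1.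
move=> j l jl E; apply: (part2 (Hf j l jl)) => x h; exact: (E x).2.
Qed.

End Main.

Theorem proposition3p6 (R : idomainType) (v : {fraction R} -> int)
  (a : nat -> int) (n i : nat) (q q' : R) :
  noetherian R -> krull_dim_one R -> is_local R ->
  Rbar_fin_gen R ->
  normalized_valuation_of_Rbar v ->
  residue_iso v ->
  value_enum v a ->
  conductor_index a n ->
  (4 <= n)%N -> (1 <= i)%N -> (i <= n - 3)%N ->
  q != 0 -> v (emb q) = a i ->
  q' != 0 -> v (emb q') = a i.+1 ->
  ~ set_eq (ideal_mul (Iv v a i) (Iv v a i.+2)) (scal_ideal q (Iv v a i.+2)) ->
  set_eq (ideal_mul (Iv v a i.+1) (Iv v a i.+3)) (scal_ideal q' (Iv v a i.+3)) ->
  (forall alpha : R, in_TR (gen_plus (q + alpha * q') (Iv v a i.+2))) /\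
  (forall alpha beta : R, ~ max_ideal (alpha - beta) ->
     ~ set_sub (gen_plus (q + beta * q') (Iv v a i.+2))
               (gen_plus (q + alpha * q') (Iv v a i.+2))) /\
  (residue_field_infinite R -> TR_infinite R).
Proof.
move=> _ _ Hloc Hfg Hv Hres Ha Hn n4 i1 i3 q0 vq q'0 vq' HA HB.
split; [|split].
- by move=> al; apply: (part1 Hv Hres Ha Hn Hfg n4 i1 i3 q0 vq q'0 vq' HA HB).
- by move=> al be; apply: (part2 Hv Hres Ha Hfg Hloc n4 i1 i3 q0 vq q'0 vq' HA HB).
- exact: (part3 Hv Hres Ha Hn Hfg Hloc n4 i1 i3 q0 vq q'0 vq' HA HB).
Qed.
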